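(* For $h>0$ let $\mathcal{K}_h=\{K\in\mathcal{K}:\ \mathrm{Tr}(P_K-P^\star)\le h\}$. For $K\in\mathcal{K}_h$ let $K'=R^{-1}B^\top P_K$ and $\Psi_K=(K-K')^\top R(K-K')$. Then for every $h>0$ there exists $b(h)>0$ such that $\|P_K-P^\star\|_F\le b(h)\|\Psi_K\|_F$ for all $K\in\mathcal{K}_h$.
   Context: Let $A\in\mathbb{R}^{n\times n}$, $B\in\mathbb{R}^{n\times m}$, $C\in\mathbb{R}^{p\times n}$, $D\in\mathbb{R}^{n\times q}$, $E\in\mathbb{R}^{p\times m}$, $\gamma>0$, with $Q:=C^\top C\succ 0$, $E^\top C=0$, $R:=E^\top E\succ 0$. For $K\in\mathbb{R}^{m\times n}$ set $A_K=A-BK$, $Q_K=Q+K^\top RK$, $T_{zw}(K)(s)=(C-EK)(sI-A+BK)^{-1}D$, and $\mathcal{K}=\{K:\ A_K\text{ Hurwitz},\ \|T_{zw}(K)\|_{\mathcal{H}_\infty}<\gamma\}$, where $\|G\|_{\mathcal{H}_\infty}=\sup_{\omega\in\mathbb{R}}\bar\sigma(G(j\omega))$. For $K\in\mathcal{K}$, $P_K$ denotes the unique symmetric positive definite solution of $A_K^\top P+PA_K+Q_K+\gamma^{-2}PDD^\top P=0$ for which $A_K+\gamma^{-2}DD^\top P_K$ is Hurwitz. $P^\star$ denotes the unique symmetric positive definite (stabilizing) solution of $A^\top P+PA-P(BR^{-1}B^\top-\gamma^{-2}DD^\top)P+Q=0$. $\mathrm{Tr}$ is the trace and $\|\cdot\|_F$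 the Frobenius norm. *)

(* Defs.v *)
From HB Require Import structures.
From mathcomp Require Import all_boot all_order all_algebra.
From mathcomp Require Import classical_sets reals.
From mathcomp Require Import complex.
Set Implicit Arguments. Unset Strict Implicit. Unset Printing Implicit Defensive.
Import Order.TTheory GRing.Theory Num.Theory.
Local Open Scope ring_scope.
Local Open Scope classical_set_scope.

Section Defs.
Variable R : realType.

Definition cmx (k l : nat) (M : 'M[R]_(k, l)) : 'M[R[i]]_(k, l) :=
  map_mx (fun x : R => Complex x 0) M.

Definition posdef (k : nat) (M : 'M[R]_k) : Prop :=
  M^T = M /\ forall x : 'cV[R]_k, x != 0 -> 0 < (x^T *m M *m x) 0 0.

Definition hurwitz (k : nat) (M : 'M[R]_k) : Prop :=
  forall lam : R[i], eigenvalue (cmx M) lam -> Re lam < 0.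

Definition cvnorm (k : nat) (v : 'cV[R[i]]_k) : R :=
  Num.sqrt (\sum_(i < k) (Normc.normc (v i 0)) ^+ 2).

Definition sigma_max (k l : nat) (G : 'M[R[i]]_(k, l)) : R :=
  sup [set cvnorm (G *m v) | v in [set v : 'cV[R[i]]_l | cvnorm v = 1]].

Definition frob (k l : nat) (M : 'M[R]_(k, l)) : R :=
  Num.sqrt (\sum_(i < k) \sum_(j < l) M i j ^+ 2).

Section Plant.
Variables (n m p q : nat).
Variables (A : 'M[R]_n) (B : 'M[R]_(n, m)) (C : 'M[R]_(p, n))
          (D : 'M[R]_(n, q)) (E : 'M[R]_(p, m)) (gamma : R).

Definition Qm : 'M[R]_n := C^T *m C.
Definition Rm : 'M[R]_m := E^T *m E.

Definition A_K (K : 'M[R]_(m, n)) : 'M[R]_n := A - B *m K.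
Definition Q_K (K : 'M[R]_(m, n)) : 'M[R]_n := Qm + K^T *m Rm *m K.

Definition Tzw (K : 'M[R]_(m, n)) (w : R) : 'M[R[i]]_(p, q) :=
  cmx (C - E *m K) *m invmx ((Complex 0 w)%:M - cmx (A_K K)) *m cmx D.

Definition hinf_norm (K : 'M[R]_(m, n)) : R :=
  sup [set sigma_max (Tzw K w) | w in [set: R]].

Definition Kset (K : 'M[R]_(m, n)) : Prop :=
  hurwitz (A_K K) /\ hinf_norm K < gamma.

Definition is_PK (K : 'M[R]_(m, n)) (P : 'M[R]_n) : Prop :=
  posdef P /\
  (A_K K)^T *m P + P *m A_K K + Q_K K + gamma ^- 2 *: (P *m D *m D^T *m P) = 0 /\
  hurwitz (A_K K + gamma ^- 2 *: (D *m D^T *m P)).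

Definition is_Pstar (P : 'M[R]_n) : Prop :=
  posdef P /\
  A^T *m P + P *m A
    - P *m (B *m invmx Rm *m B^T - gamma ^- 2 *: (D *m D^T)) *m P + Qm = 0 /\
  hurwitz (A - (B *m invmx Rm *m B^T - gamma ^- 2 *: (D *m D^T)) *m P).

End Plant.
End Defs.

(* Main.v *)
Require Import Defs.
From HB Require Import structures.
From mathcomp Require Import all_boot all_order all_algebra.
From mathcomp Require Import classical_sets reals.
From mathcomp Require Import complex.
From mathcomp Require Import perm.
From mathcomp Require Import lra ring.
Import Order.TTheory GRing.Theory Num.Theory.
Local Open Scope ring_scope.

Module Helpers.
Set Implicit Arguments. Unset Strict Implicit. Unset Printing Implicit Defensive.

Section N1.
Variable R : realType.

Definition N1 k l (X : 'M[R]_(k,l)) : R := \sum_i \sum_j `|X i j|.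

Lemma N1_ge0 k l (X : 'M[R]_(k,l)) : 0 <= N1 X.
Proof. by apply: sumr_ge0 => i _; apply: sumr_ge0 => j _. Qed.

Lemma entry_le_N1 k l (X : 'M[R]_(k,l)) i j : `|X i j| <= N1 X.
Proof.
rewrite /N1 (bigD1 i) //= (bigD1 j) //= -addrA lerDl.
apply: addr_ge0; first by apply: sumr_ge0.
by apply: sumr_ge0 => i' _; apply: sumr_ge0.
Qed.

Lemma N1D k l (X Y : 'M[R]_(k,l)) : N1 (X + Y) <= N1 X + N1 Y.
Proof.
rewrite /N1 -big_split /=; apply: ler_sum => i _.
rewrite -big_split /=; apply: ler_sum => j _; rewrite mxE; exact: ler_normD.
Qed.

Lemma N1N k l (X : 'M[R]_(k,l)) : N1 (- X) = N1 X.
Proof. by apply: eq_bigr => i _; apply: eq_bigr => j _; rewrite mxE normrN. Qed.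

Lemma N1B k l (X Y : 'M[R]_(k,l)) : N1 (X - Y) <= N1 X + N1 Y.
Proof. by rewrite -(N1N Y) N1D. Qed.

Lemma N1Z k l a (X : 'M[R]_(k,l)) : N1 (a *: X) = `|a| * N1 X.
Proof.
rewrite /N1 mulr_sumr; apply: eq_bigr => i _; rewrite mulr_sumr.
by apply: eq_bigr => j _; rewrite mxE normrM.
Qed.

Lemma N1_tr k l (X : 'M[R]_(k,l)) : N1 X^T = N1 X.
Proof. rewrite /N1 exchange_big; apply: eq_bigr => i _; apply: eq_bigr => j _; by rewrite mxE. Qed.

Lemma N1M k l r (X : 'M[R]_(k,l)) (Y : 'M[R]_(l,r)) : N1 (X *m Y) <= N1 X * N1 Y.
Proof.
rewrite /N1 mulr_suml; apply: ler_sum => i _.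
apply: (@le_trans _ _ (\sum_j \sum_t `|X i t| * `|Y t j|)).
  apply: ler_sum => j _; rewrite mxE; apply: (le_trans (ler_norm_sum _ _ _)).
  by apply: ler_sum => t _; rewrite normrM.
rewrite exchange_big /= mulr_suml; apply: ler_sum => t _.
rewrite -mulr_sumr; apply: ler_wpM2l => //.
by rewrite (bigD1 t) //= lerDl; apply: sumr_ge0 => t' _; apply: sumr_ge0.
Qed.

Lemma N1_sum I (r : seq I) (P : pred I) k l (F : I -> 'M[R]_(k,l)) :
  N1 (\sum_(i <- r | P i) F i) <= \sum_(i <- r | P i) N1 (F i).
Proof.
elim/big_rec2: _ => [|i y Y _ H]; first by rewrite /N1 big1 // => i _; rewrite big1 // => j _; rewrite mxE normr0.
by apply: (le_trans (N1D _ _)); rewrite lerD2l.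
Qed.

Lemma N1_le_entry k l (X : 'M[R]_(k,l)) mu : (forall i j, `|X i j| <= mu) -> N1 X <= (k * l)%:R * mu.
Proof.
move=> H; rewrite /N1; apply: (@le_trans _ _ (\sum_(i < k) \sum_(j < l) mu)).
  by apply: ler_sum => i _; apply: ler_sum => j _.
by rewrite !sumr_const !card_ord -mulrnA mulr_natl mulnC.
Qed.

Lemma sum_sq_le I (r : seq I) (f : I -> R) : (forall i, 0 <= f i) ->
  \sum_(i <- r) f i ^+ 2 <= (\sum_(i <- r) f i) ^+ 2.
Proof.
move=> f0; elim: r => [|a r IH]; first by rewrite !big_nil expr0n /= lexx.
rewrite !big_cons sqrrD -addrA lerD2l.
have s0 : 0 <= \sum_(i <- r) f i by apply: sumr_ge0.
apply: (le_trans IH); rewrite lerDr; apply: mulrn_wge0; exact: mulr_ge0.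
Qed.

Lemma frob_le_N1 k l (X : 'M[R]_(k,l)) : frob X <= N1 X.
Proof.
rewrite /frob -(@ger0_norm _ (N1 X)) ?N1_ge0 // -sqrtr_sqr ler_sqrt ?sqr_ge0 //.
apply: (@le_trans _ _ (\sum_i (\sum_j `|X i j|) ^+ 2)); last first.
  by apply: sum_sq_le => i; apply: sumr_ge0.
apply: ler_sum => i _; apply: le_trans (sum_sq_le _ _) => //.
by apply: ler_sum => j _; rewrite real_normK ?num_real.
Qed.

Lemma entry_le_frob k l (X : 'M[R]_(k,l)) i j : `|X i j| <= frob X.
Proof.
rewrite /frob -sqrtr_sqr ler_sqrt; last by apply: sumr_ge0 => i' _; apply: sumr_ge0 => j' _; apply: sqr_ge0.
rewrite (bigD1 i) //= (bigD1 j) //= -addrA lerDl.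
apply: addr_ge0; first by apply: sumr_ge0 => j' _; apply: sqr_ge0.
by apply: sumr_ge0 => i' _; apply: sumr_ge0 => j' _; apply: sqr_ge0.
Qed.

Lemma N1_le_frob k l (X : 'M[R]_(k,l)) : N1 X <= (k * l)%:R * frob X.
Proof. by apply: N1_le_entry => i j; apply: entry_le_frob. Qed.

Lemma N1_1 k : N1 (1%:M : 'M[R]_k) = k%:R.
Proof.
rewrite /N1 -[k in k%:R]card_ord -sumr_const; apply: eq_bigr => i _.
rewrite (bigD1 i) //= big1 ?addr0 ?mxE ?eqxx ?normr1 // => j /negbTE ji.
by rewrite mxE eq_sym ji normr0.
Qed.

Lemma N1_exp k (X : 'M[R]_k.+1) e : N1 (X ^+ e) <= k.+1%:R * N1 X ^+ e.
Proof.
elim: e => [|e IH]; first by rewrite expr0 N1_1 expr0 mulr1.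
rewrite exprSr; apply: (le_trans (N1M _ _)).
rewrite exprSr mulrA ler_wpM2r ?N1_ge0 //.
Qed.

Lemma det_le k (Y : 'M[R]_k) (mu : R) : (forall i j, `|Y i j| <= mu) ->
  `|\det Y| <= k`!%:R * mu ^+ k.
Proof.
move=> H; rewrite /determinant; apply: (le_trans (ler_norm_sum _ _ _)).
apply: (@le_trans _ _ (\sum_(s : 'S_k) mu ^+ k)); last by rewrite sumr_const card_Sn mulr_natl.
apply: ler_sum => s _.
rewrite normrM normrX normrN1 expr1n mul1r normr_prod.
rewrite -[k in mu ^+ k]card_ord -prodr_const; apply: ler_prod => i _.
by rewrite normr_ge0 H.
Qed.

Lemma N1_adj k (X : 'M[R]_k) :
  N1 (\adj X) <= (k * k)%:R * ((k.-1)`!%:R * N1 X ^+ k.-1).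
Proof.
apply: N1_le_entry => i j; rewrite mxE /cofactor normrM normrX normrN1 expr1n mul1r.
case: k X i j => [|k] X i j; first by case: i.
apply: det_le => a b; rewrite !mxE; exact: entry_le_N1.
Qed.

Lemma N1_mulmx_le k l r (X : 'M[R]_(k,l)) (Y : 'M[R]_(l,r)) a b :
  N1 X <= a -> N1 Y <= b -> N1 (X *m Y) <= a * b.
Proof.
move=> ha hb; apply: (le_trans (N1M _ _)); apply: ler_pM => //; exact: N1_ge0.
Qed.

End N1.


Lemma horner_mx_sum (R : comNzRingType) k (A : 'M[R]_k.+1) (p : {poly R}) :
  horner_mx A p = \sum_(i < size p) p`_i *: A ^+ i.
Proof.
rewrite /horner_mx /horner_morph (@horner_coef_wide _ (size p)).
  apply: eq_bigr => i _; rewrite coef_map_id0 //=; last by rewrite raddf0.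
  by rewrite -mul_scalar_mx.
exact: size_poly.
Qed.

Lemma char_poly_trmx (R : comNzRingType) k (A : 'M[R]_k) : char_poly A^T = char_poly A.
Proof.
rewrite /char_poly -det_tr; congr (\det _).
by apply/matrixP => i j; rewrite !mxE eq_sym.
Qed.


Section Sylv.
Variable R : realType.
Variable k : nat.
Variables (M Dl F W : 'M[R]_k.+1).
Hypothesis hS : M *m Dl + Dl *m F = - W.

Fixpoint Yseq e : 'M[R]_k.+1 :=
  match e with 0 => 0 | e.+1 => M *m Yseq e - W *m (- F) ^+ e end.

Lemma Yseq_eq e : M ^+ e *m Dl = Dl *m (- F) ^+ e + Yseq e.
Proof.
elim: e => [|e IH]; first by rewrite !expr0 mul1mx mulmx1 addr0.
rewrite /= exprS -mulmxE -mulmxA IH mulmxDr mulmxA.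
have -> : M *m Dl = - W - Dl *m F by rewrite -hS addrK.
rewrite mulmxBl exprS -mulmxE !mulmxA mulmxN mulNmx mulNmx.
by rewrite addrC addrA [- _ + _]addrC.
Qed.

Variable tau : R.
Hypotheses (hM : N1 M <= tau) (hF : N1 F <= tau) (h1 : 1 <= tau).

Lemma Yseq_bound e : N1 (Yseq e) <= e%:R * k.+1%:R * tau ^+ e * N1 W.
Proof.
have t0 : 0 <= tau by apply: le_trans h1.
elim: e => [|e IH]; first by rewrite /N1 big1 ?mul0r ?mul0r // => i _; rewrite big1 // => j _; rewrite mxE normr0.
rewrite /=; apply: (le_trans (N1B _ _)).
apply: (@le_trans _ _ (tau * (e%:R * k.+1%:R * tau ^+ e * N1 W) + N1 W * (k.+1%:R * tau ^+ e))).
  apply: lerD; apply: N1_mulmx_le => //.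
  apply: (le_trans (N1_exp _ _)); apply: ler_wpM2l => //; apply: lerXn2r => //; rewrite ?nnegrE ?N1_ge0 //.
  by rewrite N1N.
have W0 := N1_ge0 W.
rewrite -[e.+1]addn1 natrD exprD expr1.
set K1 := k.+1%:R; set t := tau ^+ e.
have K0 : 0 <= K1 by rewrite /K1.
have t0' : 0 <= t by rewrite /t exprn_ge0.
have H := mulr_ge0 (mulr_ge0 K0 t0') W0.
have aux : forall a c X : R, 1 <= a -> 0 <= X -> a * c * X + X <= (c + 1) * a * X.
  by move=> a c X ha hX; nra.
have := aux tau e%:R (K1 * t * N1 W) h1 H.
have -> : tau * e%:R * (K1 * t * N1 W) + K1 * t * N1 W = tau * (e%:R * K1 * t * N1 W) + N1 W * (K1 * t) by ring.
by have -> : (e%:R + 1) * tau * (K1 * t * N1 W) = (e%:R + 1) * K1 * (t * tau) * N1 W by ring.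
Qed.

Lemma sylv_CH (p : {poly R}) : horner_mx M p = 0 ->
  N1 (Dl *m horner_mx (- F) p) <=
    (\sum_(i < size p) `|p`_i| * (i%:R * k.+1%:R * tau ^+ i)) * N1 W.
Proof.
move=> hp.
have -> : Dl *m horner_mx (- F) p = - \sum_(i < size p) p`_i *: Yseq i.
  have H0 : \sum_(i < size p) p`_i *: (M ^+ i *m Dl) = 0.
    have : horner_mx M p *m Dl = \sum_(i < size p) p`_i *: (M ^+ i *m Dl).
      by rewrite horner_mx_sum mulmx_suml; apply: eq_bigr => i _; rewrite scalemxAl.
    by rewrite hp mul0mx => <-.
  have E : Dl *m horner_mx (- F) p + \sum_(i < size p) p`_i *: Yseq i =
           \sum_(i < size p) p`_i *: (M ^+ i *m Dl).
    rewrite horner_mx_sum mulmx_sumr -big_split /=; apply: eq_bigr => i _.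
    by rewrite Yseq_eq scalerDr scalemxAr.
  by apply/eqP; rewrite -subr_eq0 opprK E H0.
rewrite N1N; apply: (le_trans (N1_sum _ _ _)); rewrite mulr_suml; apply: ler_sum => i _.
rewrite N1Z -mulrA ler_wpM2l //; exact: Yseq_bound.
Qed.
End Sylv.


Lemma horner_char (F : comNzRingType) k (A : 'M[F]_k) a :
  (char_poly A).[a] = \det (a%:M - A).
Proof.
rewrite horner_sum; apply: eq_bigr => s _.
rewrite hornerM horner_exp !hornerE; congr (_ * _).
rewrite (big_morph _ (fun p q => hornerM p q a) (hornerC 1 a)).
by apply: eq_bigr => i _; rewrite !mxE !(hornerE, hornerMn).
Qed.

Lemma prod_le_seq (R : numDomainType) (T : eqType) (s : seq T) (f g : T -> R) :
  (forall x, x \in s -> 0 <= f x <= g x) -> \prod_(x <- s) f x <= \prod_(x <- s) g x.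
Proof.
elim: s => [|a s IH] H; first by rewrite !big_nil.
rewrite !big_cons; have /andP[fa ga] := H a (mem_head _ _).
apply: ler_pM => //.
  rewrite big_seq; apply: prodr_ge0 => x xs.
  have : x \in a :: s by rewrite inE xs orbT.
  by move=> /H /andP[].
by apply: IH => x xs; apply: H; rewrite inE xs orbT.
Qed.

Section DetLB.
Variable R : realType.
Local Notation C := (R[i]).
Local Notation fC := (@real_complex_def R (Phant R)).

Lemma cmxE k l (M : 'M[R]_(k,l)) : cmx M = map_mx fC M.
Proof. by []. Qed.

Lemma ReC_lt0 (z : C) : Num.Theory.Re z < 0 -> complex.Re z < 0.
Proof. by rewrite -complexRe -[0 : C]/(fC 0) ltcR. Qed.

Lemma normc_Re (w : C) : complex.Re w <= Normc.normc w.
Proof.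
case: w => a b /=; apply: (le_trans (ler_norm a)).
rewrite -sqrtr_sqr ler_sqrt ?lerDl ?sqr_ge0 //.
by apply: addr_ge0; apply: sqr_ge0.
Qed.

Lemma normc_real (x : R) : Normc.normc (fC x) = `|x|.
Proof. by rewrite /= expr0n /= addr0 sqrtr_sqr. Qed.

Lemma normc_prod (T : Type) (s : seq T) (f : T -> C) :
  Normc.normc (\prod_(x <- s) f x) = \prod_(x <- s) Normc.normc (f x).
Proof.
elim: s => [|a s IH]; first by rewrite !big_nil Normc.normc1.
by rewrite !big_cons Normc.normcM IH.
Qed.

Lemma det_prod k (T : Type) (s : seq T) (f : T -> 'M[C]_k.+1) :
  \det (\prod_(x <- s) f x) = \prod_(x <- s) \det (f x).
Proof.
elim: s => [|a s IH]; first by rewrite !big_nil det1.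
by rewrite !big_cons -mulmxE det_mulmx IH.
Qed.

Lemma char_split k (A : 'M[C]_k) :
  {rs : seq C | char_poly A = \prod_(z <- rs) ('X - z%:P) & size rs = k}.
Proof.
have [rs Hrs] := closed_field_poly_normal (char_poly A).
rewrite (monicP (char_poly_monic A)) scale1r in Hrs.
exists rs => //.
have := size_char_poly A; rewrite Hrs size_prod_XsubC.
by case.
Qed.

Lemma prod_const_seq (T : Type) (s : seq T) (c : R) : \prod_(x <- s) c = c ^+ size s.
Proof. by elim: s => [|a s IH]; rewrite ?big_nil ?expr0 // big_cons IH exprS. Qed.

Lemma det_lb k (A0 : 'M[R]_k.+1) : hurwitz A0 ->
  exists c0 : R, 0 < c0 /\ forall F : 'M[R]_k.+1, hurwitz F ->
    c0 <= `|\det (horner_mx (- F) (char_poly A0))|.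
Proof.
move=> hA.
have [rs Hrs srs] := char_split (cmx A0).
have rsneg : forall z, z \in rs -> complex.Re z < 0.
  by move=> z zin; apply: ReC_lt0; apply: hA; rewrite eigenvalue_root_char Hrs root_prod_XsubC.
exists (\prod_(z <- rs) (- complex.Re z) ^+ k.+1); split.
  rewrite big_seq; apply: prodr_gt0 => z zin; apply: exprn_gt0; rewrite oppr_gt0; exact: rsneg.
move=> F hF.
have [ls Hls sls] := char_split (cmx F).
have lsneg : forall z, z \in ls -> complex.Re z < 0.
  by move=> z zin; apply: ReC_lt0; apply: hF; rewrite eigenvalue_root_char Hls root_prod_XsubC.
rewrite -normc_real -det_map_mx map_horner_mx map_char_poly -cmxE Hrs rmorph_prod /= det_prod normc_prod.
apply: prod_le_seq => z zin.
rewrite rmorphB /= horner_mx_X horner_mx_C [cmx (- F)]cmxE map_mxN -cmxE.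
have -> : - cmx F - z%:M = (- z)%:M - cmx F by rewrite addrC raddfN.
rewrite -horner_char Hls horner_prod normc_prod.
have z0 : 0 <= - complex.Re z by rewrite oppr_ge0 ltW // rsneg.
rewrite exprn_ge0 //= -sls -prod_const_seq.
apply: prod_le_seq => l lin; rewrite z0 /= hornerXsubC.
apply: le_trans (normc_Re _).
have := lsneg l lin; case: z {zin z0} => a b; case: l {lin} => c d /=.
move=> hc; rewrite lerDl oppr_ge0 ltW //.
Qed.

End DetLB.


Section Ric.
Variable R : realType.

Lemma eD a b (X Y : 'M[R]_(a,b)) i j : (X + Y) i j = X i j + Y i j. Proof. by rewrite mxE. Qed.
Lemma eN a b (X : 'M[R]_(a,b)) i j : (- X) i j = - X i j. Proof. by rewrite mxE. Qed.
Lemma eZ a b c (X : 'M[R]_(a,b)) i j : (c *: X) i j = c * X i j. Proof. by rewrite mxE. Qed.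
Lemma trD a b (X Y : 'M[R]_(a,b)) : (X + Y)^T = X^T + Y^T. Proof. by apply/matrixP => i j; rewrite !mxE. Qed.
Lemma trN a b (X : 'M[R]_(a,b)) : (- X)^T = - X^T. Proof. by apply/matrixP => i j; rewrite !mxE. Qed.
Lemma trZ a b c (X : 'M[R]_(a,b)) : (c *: X)^T = c *: X^T. Proof. by apply/matrixP => i j; rewrite !mxE. Qed.
Lemma e0 a b i j : (0 : 'M[R]_(a,b)) i j = 0. Proof. by rewrite mxE. Qed.

Lemma ric_ident n m q (A Q P Ps : 'M[R]_n) (B : 'M_(n,m)) (D : 'M_(n,q))
  (Rr Ri : 'M_m) (K : 'M_(m,n)) (g : R) :
  Ri^T = Ri -> Ri *m Rr = 1%:M -> Rr *m Ri = 1%:M -> P^T = P -> Ps^T = Ps ->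
  (A - B *m K)^T *m P + P *m (A - B *m K) + (Q + K^T *m Rr *m K)
     + g *: (P *m D *m D^T *m P) = 0 ->
  A^T *m Ps + Ps *m A - Ps *m (B *m Ri *m B^T - g *: (D *m D^T)) *m Ps + Q = 0 ->
  (A - (B *m Ri *m B^T - g *: (D *m D^T)) *m Ps)^T *m (P - Ps)
     + (P - Ps) *m (A - B *m K + g *: (D *m D^T *m P))
   = - ((K - Ri *m B^T *m P)^T *m Rr *m (K - Ri *m B^T *m P)
        + (P - Ps) *m B *m (K - Ri *m B^T *m P)).
Proof.
move=> hRi hRR1 hRR2 hP hPs EK ES.
have c1 : forall a (X : 'M[R]_(a,m)), X *m Ri *m Rr = X by move=> a X; rewrite -mulmxA hRR1 mulmx1.
have c2 : forall a (X : 'M[R]_(a,m)), X *m Rr *m Ri = X by move=> a X; rewrite -mulmxA hRR2 mulmx1.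
apply/eqP; rewrite eq_sym -subr_eq0; apply/eqP.
rewrite -[RHS](subr0 0).
rewrite -{1}ES -EK.
rewrite !(trD, trN, trZ, trmx_mul, trmxK, hRi, hP, hPs).
rewrite !(mulmxDl, mulmxDr, mulmxBl, mulmxBr, mulNmx, mulmxN, opprK).
rewrite -!(scalemxAl, scalemxAr) !mulmxA !c1 !c2.
apply/matrixP => i j; rewrite !(eD, eN, eZ, e0).
lra.
Qed.
End Ric.


Section PSD.
Variable R : realType.

Lemma qf_delta n (P : 'M[R]_n) a b :
  ((((@delta_mx R n 1 a 0) : 'cV[R]_n)^T *m P *m (@delta_mx R n 1 b 0)) 0 0) = P a b.
Proof. by rewrite trmx_delta -rowE -colE !mxE. Qed.

Lemma qf_ge0 n (P : 'M[R]_n) : posdef P -> forall x : 'cV[R]_n, 0 <= (x^T *m P *m x) 0 0.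
Proof.
case=> _ H x; have [->|nz] := eqVneq x 0; last exact/ltW/H.
by rewrite mulmx0 mxE.
Qed.

Lemma psd_entry n (P : 'M[R]_n) : posdef P -> forall i j, `|P i j| <= (P i i + P j j) / 2.
Proof.
move=> hP i j; have q0 := qf_ge0 hP.
have E : forall s : R, (((@delta_mx R n 1 i 0) + s *: (@delta_mx R n 1 j 0) : 'cV[R]_n)^T *m P *m ((@delta_mx R n 1 i 0) + s *: (@delta_mx R n 1 j 0))) 0 0
   = P i i + s * (P i j + P j i) + s ^+ 2 * P j j.
  move=> s; rewrite trD trZ !(mulmxDl, mulmxDr) -!(scalemxAl, scalemxAr) !(eD, eZ) !qf_delta.
  by rewrite expr2; lra.
have sym : P j i = P i j by case: hP => hs _; rewrite -{1}hs mxE.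
have h1 := q0 ((@delta_mx R n 1 i 0) + 1 *: (@delta_mx R n 1 j 0)).
have h2 := q0 ((@delta_mx R n 1 i 0) + (-1) *: (@delta_mx R n 1 j 0)).
rewrite E sym in h1; rewrite E sym in h2.
rewrite expr1n in h1; rewrite sqrrN expr1n in h2.
rewrite ler_norml; apply/andP; split; lra.
Qed.

Lemma psd_N1 n (P : 'M[R]_n) : posdef P -> N1 P <= n%:R * \tr P.
Proof.
move=> hP; rewrite /N1.
apply: (@le_trans _ _ (\sum_i \sum_j (P i i + P j j) / 2)).
  by apply: ler_sum => i _; apply: ler_sum => j _; apply: psd_entry.
under eq_bigr => i _ do rewrite -mulr_suml big_split /= sumr_const card_ord.
rewrite -mulr_suml big_split /= sumr_const card_ord /mxtrace.
by rewrite -sumrMnl -mulr2n -[_ *+ 2]mulr_natr mulfK ?pnatr_eq0 // sumrMnl mulr_natl.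
Qed.
End PSD.



Section More.
Variable R : realType.

Lemma posdef_unit k (M : 'M[R]_k) : posdef M -> M \in unitmx.
Proof.
case=> _ H; rewrite unitmxE unitfE; apply/negP => /det0P [v nz vM].
have : v^T != 0 by rewrite trmx_eq0.
by move/H; rewrite trmxK vM mul0mx mxE ltxx.
Qed.

Lemma gram_entry a b (Z : 'M[R]_(a,b)) k j : `|Z k j| <= Num.sqrt (N1 (Z^T *m Z)).
Proof.
rewrite -sqrtr_sqr ler_sqrt ?N1_ge0 //.
apply: le_trans (entry_le_N1 _ j j).
apply: le_trans (ler_norm _).
rewrite mxE (bigD1 k) //= mxE -expr2 lerDl.
by apply: sumr_ge0 => i _; rewrite mxE -expr2 sqr_ge0.
Qed.

Lemma N1_gram a b (Z : 'M[R]_(a,b)) : N1 Z <= (a * b)%:R * Num.sqrt (N1 (Z^T *m Z)).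
Proof. by apply: N1_le_entry => i j; apply: gram_entry. Qed.

End More.
End Helpers.
Import Helpers.

Ltac pos := repeat first [assumption | apply: N1_ge0 | apply: addr_ge0 | apply: mulr_ge0 | apply: exprn_ge0 | apply: normr_ge0 | apply: ler0n].

Unset Implicit Arguments.
Set Strict Implicit.

Theorem lemma5 (R : realType) (n m p q : nat)
  (A : 'M[R]_n) (B : 'M[R]_(n, m)) (C : 'M[R]_(p, n))
  (D : 'M[R]_(n, q)) (E : 'M[R]_(p, m)) (gamma : R)
  (hgamma : 0 < gamma)
  (hQ : posdef (Qm C))
  (hEC : E^T *m C = 0)
  (hR : posdef (Rm E))
  (Pstar : 'M[R]_n) (hPstar : is_Pstar A B C D E gamma Pstar) :
  forall h : R, 0 < h ->
  exists b : R, 0 < b /\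
    forall (K : 'M[R]_(m, n)) (PK : 'M[R]_n),
      Kset A B C D E gamma K ->
      is_PK A B C D E gamma K PK ->
      \tr (PK - Pstar) <= h ->
      let K' := invmx (Rm E) *m B^T *m PK in
      let Psi := (K - K')^T *m Rm E *m (K - K') in
      frob (PK - Pstar) <= b * frob Psi.
Proof.
move=> h hh.
case: n A B C D Pstar hQ hEC hPstar => [|n'] A B C D Pstar hQ hEC hPstar.
  exists 1; split => // K PK _ _ _ /=.
  by rewrite /frob big_ord0 sqrtr0 mul1r sqrtr_ge0.
set n := n'.+1.
set Rr := Rm E; set Ri := invmx Rr.
have hRu : Rr \in unitmx by apply: posdef_unit.
have hRsym : Rr^T = Rr by case: hR.
have hRi : Ri^T = Ri by rewrite /Ri trmx_inv hRsym.
have hRR1 : Ri *m Rr = 1%:M by rewrite /Ri mulVmx.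
have hRR2 : Rr *m Ri = 1%:M by rewrite /Ri mulmxV.
set g := gamma ^- 2.
set S := B *m Ri *m B^T - g *: (D *m D^T).
set Ast := A - S *m Pstar.
case: hPstar => [hPs [ES hAst]].
have hPsym : Pstar^T = Pstar by case: hPs.
set M := Ast^T.
set pp := char_poly Ast.
have CH : horner_mx M pp = 0 by rewrite /pp -char_poly_trmx Cayley_Hamilton.
have [c0 [c0pos hc0]] := det_lb hAst.
set bP := n%:R * (h + \tr Pstar).
set bK := N1 Ri * N1 B^T * bP.
set bV := N1 (Ri *m E^T) * (p * n)%:R.
set bF := N1 A + N1 B * (bK + bV) + N1 (g *: (D *m D^T)) * bP.
set tau := 1 + N1 M + bF.
set CZ := \sum_(i < size pp) `|pp`_i| * (i%:R * n%:R * tau ^+ i).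
set bT := \sum_(i < size pp) `|pp`_i| * (n%:R * tau ^+ i).
set bA := (n * n)%:R * ((n.-1)`!%:R * bT ^+ n.-1).
set Cc := CZ * bA / c0.
set X := Cc * N1 B * bV.
set eps := 1 / (4 * (X ^+ 2 + 1)).
set bD := bP + N1 Pstar.
set b0 := 2 * Cc + bD / eps.
have trPs0 : 0 <= \tr Pstar.
  by rewrite /mxtrace; apply: sumr_ge0 => i _; rewrite -qf_delta; apply: (qf_ge0 hPs).
have bP0 : 0 <= bP by rewrite /bP mulr_ge0 // addr_ge0 // ltW.
have bV0 : 0 <= bV by rewrite /bV; pos.
have bK0 : 0 <= bK by rewrite /bK; pos.
have bF0 : 0 <= bF by rewrite /bF; pos.
have tau1 : 1 <= tau by rewrite /tau -addrA lerDl; pos.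
have tau0 : 0 <= tau by apply: le_trans tau1.
have CZ0 : 0 <= CZ by apply: sumr_ge0 => i _; pos.
have bT0 : 0 <= bT by apply: sumr_ge0 => i _; pos.
have bA0 : 0 <= bA by rewrite /bA; pos.
have Cc0 : 0 <= Cc by rewrite /Cc; pos; rewrite invr_ge0 ltW.
have X0 : 0 <= X by rewrite /X; pos.
have eps0 : 0 < eps by rewrite /eps divr_gt0 // mulr_gt0 // ltr_pwDr // sqr_ge0.
have eps1 : eps <= 1.
  rewrite /eps ler_pdivrMr ?mul1r ?mulr_gt0 ?ltr_pwDr ?sqr_ge0 //.
  have := sqr_ge0 X; lra.
have bD0 : 0 <= bD by rewrite /bD; pos.
have b00 : 0 <= b0 by rewrite /b0; pos; rewrite ?invr_ge0 ltW.
exists (b0 * (n * n)%:R + 1); split; first by rewrite ltr_pwDr ?mulr_ge0.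
move=> K PK _ [hPK [EK hF]] htr; cbv zeta.
set V := K - Ri *m B^T *m PK.
set Psi := V^T *m Rr *m V.
set Dl := PK - Pstar.
set F := A - B *m K + g *: (D *m D^T *m PK).
have hF' : hurwitz F by exact: hF.
have hPKsym : PK^T = PK by case: hPK.
have Sylv : M *m Dl + Dl *m F = - (Psi + Dl *m B *m V).
  exact: (ric_ident (Q := Qm C) hRi hRR1 hRR2 hPKsym hPsym EK ES).
have NP : N1 PK <= bP.
  apply: le_trans (psd_N1 hPK) _; rewrite /bP ler_wpM2l //.
  move: htr; rewrite raddfB /=; lra.
have NDl : N1 Dl <= bD by apply: le_trans (N1B _ _) _; rewrite /bD lerD2r.
have hPsiE : Psi = (E *m V)^T *m (E *m V) by rewrite /Psi /Rr /Rm trmx_mul !mulmxA.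
set NPsi := N1 Psi.
have NPsi0 : 0 <= NPsi by apply: N1_ge0.
have sq0 : 0 <= Num.sqrt NPsi by apply: sqrtr_ge0.
have hZ : N1 (E *m V) <= (p * n)%:R * Num.sqrt NPsi by rewrite /NPsi hPsiE; apply: N1_gram.
have hVb : N1 V <= bV * Num.sqrt NPsi.
  have -> : V = (Ri *m E^T) *m (E *m V) by rewrite mulmxA -(mulmxA Ri) hRR1 mul1mx.
  by rewrite /bV -mulrA; apply: N1_mulmx_le.
have main : N1 Dl <= b0 * NPsi.
  have [small|big] := lerP NPsi eps; last first.
    apply: (@le_trans _ _ (bD / eps * NPsi)).
      apply: le_trans NDl _; rewrite mulrAC ler_pdivlMr //; apply: ler_wpM2l => //; exact: ltW.
    by apply: ler_wpM2r => //; rewrite /b0 lerDr; pos.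
  have s1 : Num.sqrt NPsi <= 1.
    by rewrite -sqrtr1 ler_sqrt //; apply: le_trans eps1.
  have NV : N1 V <= bV by apply: le_trans hVb _; rewrite ler_piMr.
  have NK' : N1 (Ri *m B^T *m PK) <= bK.
    by rewrite /bK; apply: N1_mulmx_le => //; apply: N1_mulmx_le.
  have NK : N1 K <= bK + bV.
    have -> : K = Ri *m B^T *m PK + V by rewrite /V addrC subrK.
    by apply: le_trans (N1D _ _) _; apply: lerD.
  have NF : N1 F <= bF.
    rewrite /F /bF scalemxAl.
    apply: le_trans (N1D _ _) _; apply: lerD; last by apply: N1_mulmx_le.
    apply: le_trans (N1B _ _) _; rewrite lerD2l; exact: N1_mulmx_le.
  have NMt : N1 M <= tau by rewrite /tau; have := N1_ge0 M; lra.
  have NFt : N1 F <= tau by rewrite /tau; have := N1_ge0 M; lra.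
  set T := horner_mx (- F) pp.
  have hZ' := sylv_CH Sylv NMt NFt tau1 CH.
  have NT : N1 T <= bT.
    rewrite /T horner_mx_sum; apply: le_trans (N1_sum _ _ _) _.
    apply: ler_sum => i _; rewrite N1Z; apply: ler_wpM2l => //.
    apply: le_trans (N1_exp _ _) _; apply: ler_wpM2l => //.
    by apply: lerXn2r; rewrite ?nnegrE ?N1_ge0 ?N1N.
  have NA : N1 (\adj T) <= bA.
    apply: le_trans (N1_adj _) _; rewrite /bA; apply: ler_wpM2l => //; apply: ler_wpM2l => //.
    by apply: lerXn2r; rewrite ?nnegrE ?N1_ge0.
  have hdet := hc0 _ hF'.
  have key : `|\det T| * N1 Dl <= N1 (Dl *m T) * bA.
    have -> : `|\det T| * N1 Dl = N1 (Dl *m T *m \adj T).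
      by rewrite -mulmxA mul_mx_adj mul_mx_scalar N1Z.
    by apply: N1_mulmx_le.
  rewrite -/CZ -/T in hZ'.
  set W := Psi + Dl *m B *m V in hZ'.
  have NW : N1 W <= NPsi + N1 Dl * N1 B * (bV * Num.sqrt NPsi).
    apply: le_trans (N1D _ _) _; rewrite lerD2l.
    by apply: N1_mulmx_le => //; apply: N1_mulmx_le.
  have Xs : X * Num.sqrt NPsi <= 1 / 2.
    have XE : X ^+ 2 * eps <= 1 / 4.
      rewrite /eps mulrA mulr1 ler_pdivrMr; last by rewrite mulr_gt0 // ltr_pwDr // sqr_ge0.
      lra.
    have : (X * Num.sqrt NPsi) ^+ 2 <= 1 / 4.
      rewrite exprMn sqr_sqrtr //; apply: le_trans XE.
      by apply: ler_wpM2l => //; apply: sqr_ge0.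
    have : 0 <= X * Num.sqrt NPsi by pos.
    move: (X * Num.sqrt NPsi) => y; rewrite expr2 => y0 hy; nra.
  have NDl0 : 0 <= N1 Dl by apply: N1_ge0.
  have NDlW : N1 Dl <= Cc * N1 W.
    rewrite /Cc mulrAC ler_pdivlMr //.
    have h1 : c0 * N1 Dl <= `|\det T| * N1 Dl by apply: ler_wpM2r.
    have h2 : N1 (Dl *m T) * bA <= CZ * N1 W * bA by apply: ler_wpM2r.
    have h3 : CZ * N1 W * bA = CZ * bA * N1 W by rewrite mulrAC.
    lra.
  have h4 : Cc * N1 W <= Cc * (NPsi + N1 Dl * N1 B * (bV * Num.sqrt NPsi)) by apply: ler_wpM2l.
  have h5 : Cc * (NPsi + N1 Dl * N1 B * (bV * Num.sqrt NPsi)) = Cc * NPsi + N1 Dl * (X * Num.sqrt NPsi).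
    by rewrite /X; ring.
  have h6 : N1 Dl * (X * Num.sqrt NPsi) <= N1 Dl * (1 / 2) by apply: ler_wpM2l.
  have h7 : 2 * Cc * NPsi <= b0 * NPsi by apply: ler_wpM2r => //; rewrite /b0 lerDl; pos; rewrite invr_ge0 ltW.
  lra.
apply: (le_trans (frob_le_N1 _)); apply: (le_trans main).
have := N1_le_frob Psi; rewrite -/NPsi => hf.
have f0 : 0 <= frob Psi by apply: sqrtr_ge0.
apply: (@le_trans _ _ (b0 * ((n * n)%:R * frob Psi))); first by apply: ler_wpM2l.
by rewrite mulrA [(_ + 1) * _]mulrDl mul1r lerDl.
Qed.
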